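(* Let $f : \{0, 1\}^n \to \{0, 1\}$ be a symmetric Boolean function. Then $\mathsf{NAADT}(f) = O(\mathsf{D}_{\mathrm{cc}}(f \circ \mathsf{AND})^2)$.
   Context: $f$ is symmetric if $f(x)$ depends only on the Hamming weight of $x$. For $S\subseteq[n]$, $\mathsf{AND}_S(x)=\prod_{i\in S}x_i$. $\mathsf{NAADT}(f)$ (non-adaptive AND decision tree complexity) is the minimum $k$ for which there exist $S_1,\dots,S_k\subseteq[n]$ such that $f(x)$ is determined by the values $\mathsf{AND}_{S_1}(x),\dots,\mathsf{AND}_{S_k}(x)$ for all $x\in\{0,1\}^n$. $f\circ\mathsf{AND}$ is the two-party function $(x,y)\mapsto f(x_1\wedge y_1,\dots,x_n\wedge y_n)$ with Alice holding $x$, Bob holding $y$, and $\mathsf{D}_{\mathrm{cc}}$ is deterministic (two-way) communication complexity. *)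

(* Defs.v *)
From mathcomp Require Import all_boot.
Set Implicit Arguments. Unset Strict Implicit. Unset Printing Implicit Defensive.

Notation bvec n := {ffun 'I_n -> bool}.

Definition hweight n (x : bvec n) : nat := #|[set i | x i]|.

Definition symmetric_fun n (f : bvec n -> bool) : Prop :=
  forall x y : bvec n, hweight x = hweight y -> f x = f y.

Definition AND_S n (S : {set 'I_n}) (x : bvec n) : bool := [forall i in S, x i].

Definition determines n (f : bvec n -> bool) (Ss : seq {set 'I_n}) : Prop :=
  forall x y : bvec n, (forall S, S \in Ss -> AND_S S x = AND_S S y) -> f x = f y.

Definition naadt_le n (f : bvec n -> bool) (k : nat) : Prop :=
  exists Ss : seq {set 'I_n}, size Ss = k /\ determines f Ss.

Definition NAADT_is n (f : bvec n -> bool) (k : nat) : Prop :=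
  naadt_le f k /\ forall k', naadt_le f k' -> k <= k'.

Inductive protocol (X Y : Type) : Type :=
  | PLeaf of bool
  | PAlice of (X -> bool) & protocol X Y & protocol X Y
  | PBob of (Y -> bool) & protocol X Y & protocol X Y.

Fixpoint peval X Y (P : protocol X Y) (x : X) (y : Y) : bool :=
  match P with
  | PLeaf b => b
  | PAlice a P0 P1 => if a x then peval P1 x y else peval P0 x y
  | PBob b P0 P1 => if b y then peval P1 x y else peval P0 x y
  end.

(* Communication cost = depth of the protocol tree (bits sent on worst path). *)
Fixpoint pdepth X Y (P : protocol X Y) : nat :=
  match P with
  | PLeaf _ => 0
  | PAlice _ P0 P1 => (maxn (pdepth P0) (pdepth P1)).+1
  | PBob _ P0 P1 => (maxn (pdepth P0) (pdepth P1)).+1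
  end.

Definition dcc_le X Y (F : X -> Y -> bool) (d : nat) : Prop :=
  exists P : protocol X Y, (forall x y, peval P x y = F x y) /\ pdepth P <= d.

Definition Dcc_is X Y (F : X -> Y -> bool) (d : nat) : Prop :=
  dcc_le F d /\ forall d', dcc_le F d' -> d <= d'.

Definition compAND n (f : bvec n -> bool) (x y : bvec n) : bool :=
  f [ffun i => x i && y i].

(* Main.v *)
Require Import Defs.
From mathcomp Require Import all_boot all_order all_algebra ring lra zify.
Set Implicit Arguments. Unset Strict Implicit. Unset Printing Implicit Defensive.
Import Order.TTheory GRing.Theory Num.Theory.


Section Diff.
Local Open Scope ring_scope.

Definition dif (h : nat -> rat) : nat -> rat := fun x => h x.+1 - h x.
Definition difn k (h : nat -> rat) := iter k dif h.

Lemma difnS k h : difn k.+1 h = difn k (dif h).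
Proof. by rewrite /difn iterSr. Qed.

Lemma difnS' k h x : difn k.+1 h x = difn k h x.+1 - difn k h x.
Proof. by []. Qed.

Lemma const_prefix s h c : (0 < s)%N -> (forall i, (i < s)%N -> h (c + i)%N = h c) ->
  difn s h c = h (c + s)%N - h c.
Proof.
elim: s h => // s IH h _ Hc.
case: s IH Hc => [|s] IH Hc; first by rewrite /difn /= /dif addn1.
have H1 : h c.+1 = h c by rewrite -addn1 Hc.
rewrite difnS IH //; last first.
  move=> i lti; rewrite /dif -!addnS !Hc //; last exact: leq_trans lti _.
  by rewrite H1.
by rewrite /dif -!addnS H1 (Hc s.+1) // subrr subr0.
Qed.

Lemma newton h c k : h (c + k)%N = \sum_(s < k.+1) ('C(k, s))%:R * difn s h c.
Proof.
elim: k c => [|k IH] c; first by rewrite big_ord1 addn0 bin0 mul1r.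
rewrite addnS -addSn IH.
have E : forall s, difn s h c.+1 = difn s.+1 h c + difn s h c.
  by move=> s; rewrite difnS' subrK.
have L1 : \sum_(s < k.+1) ('C(k, s))%:R * difn s h c =
   h c + \sum_(s < k) ('C(k, s.+1))%:R * difn s.+1 h c.
  by rewrite big_ord_recl bin0 mul1r.
have L2 : \sum_(s < k.+1) ('C(k, s.+1))%:R * difn s.+1 h c =
   \sum_(s < k) ('C(k, s.+1))%:R * difn s.+1 h c.
  by rewrite big_ord_recr /= bin_small // mul0r addr0.
under eq_bigr => s _ do rewrite E mulrDr.
rewrite big_split L1 [in RHS]big_ord_recl bin0 mul1r.
under [in RHS]eq_bigr => s _ do rewrite binS natrD mulrDl.
rewrite big_split -L2 /=.
rewrite addrC -!addrA; congr (_ + _); rewrite addrC; congr (_ + _).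
Qed.

End Diff.


Section SSum.
Local Open Scope ring_scope.
Variable I : finType.

Definition ssum (S : {set I}) (phi : {set I} -> rat) :=
  \sum_(T : {set I} | T \subset S) phi T.

Lemma ssum_split (S : {set I}) (i : I) (phi : {set I} -> rat) : i \in S ->
  ssum S phi = ssum (S :\ i) (fun T => phi T + phi (i |: T)).
Proof.
move=> iS; rewrite /ssum (bigID (fun T : {set I} => i \in T)) /= addrC big_split /=.
congr (_ + _).
  by apply: eq_bigl => T; rewrite subsetD1.
rewrite (reindex_onto (fun T => i |: T) (fun T => T :\ i)) /=; last first.
  by move=> T /andP[_ iT]; rewrite setD1K.
apply: eq_bigl => T; rewrite setU11 andbT subUset sub1set iS /=.
rewrite subsetD1; congr (_ && _).
apply/eqP/idP => [<-|iT]; first by rewrite setD11.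
by rewrite setU1K.
Qed.

Lemma ssum_vanish (S : {set I}) (i : I) (phi : {set I} -> rat) : i \in S ->
  (forall T : {set I}, T \subset S :\ i -> phi (i |: T) = - phi T) -> ssum S phi = 0.
Proof.
move=> iS H; rewrite (ssum_split _ iS) /ssum big1 // => T TS.
by rewrite H // addrN.
Qed.

Lemma ssum_diff (S : {set I}) h :
  ssum S (fun T => (-1) ^+ (#|S| - #|T|) * h #|T|) = difn #|S| h 0.
Proof.
move eqk : #|S| => k; elim: k S h eqk => [|k IH] S h eqk.
  move/eqP: eqk; rewrite cards_eq0 => /eqP ->.
  rewrite /ssum (big_pred1 set0); first by rewrite cards0 expr0 mul1r.
  by move=> T; rewrite subset0.
have : (0 < #|S|)%N by rewrite eqk.
case/card_gt0P => i iS.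
rewrite (ssum_split _ iS).
have eqk' : #|S :\ i| = k by move: eqk; rewrite (cardsD1 i) iS add1n => -[].
rewrite difnS -(IH (S :\ i) (dif h) eqk').
apply: eq_bigr => T TS.
have iT : i \notin T by move: TS; rewrite subsetD1 => /andP[].
have Tk : (#|T| <= k)%N by rewrite -eqk'; exact: subset_leq_card.
rewrite cardsU1 iT add1n subSS subSn // exprS /dif.
ring.
Qed.

End SSum.


Section Rank.
Local Open Scope ring_scope.
Variables (X Y : finType) (m : nat) (al : 'I_m -> X -> rat) (be : 'I_m -> Y -> rat).

Definition Mp (P : protocol X Y) (rho : X -> rat) (sig : Y -> rat) : 'M[rat]_m :=
  \matrix_(i, j) \sum_x \sum_y al i x * be j y * rho x * sig y * (peval P x y)%:R.

Lemma Mp_rank P rho sig : (\rank (Mp P rho sig) <= 2 ^ pdepth P)%N.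
Proof.
elim: P rho sig => [b|a P0 IH0 P1 IH1|b P0 IH0 P1 IH1] rho sig /=.
- have -> : Mp (PLeaf X Y b) rho sig =
     (\col_i (\sum_x al i x * rho x)) *m (\row_j ((\sum_y be j y * sig y) * b%:R)).
    apply/matrixP => i j; rewrite !mxE big_ord1 !mxE mulr_suml.
    apply: eq_bigr => x _; rewrite mulr_suml mulr_sumr; apply: eq_bigr => y _ /=.
    by rewrite /=; ring.
  by rewrite expn0; apply: leq_trans (mxrankM_maxl _ _) (rank_leq_col _).
- have -> : Mp (PAlice a P0 P1) rho sig =
     Mp P1 (fun x => rho x * (a x)%:R) sig + Mp P0 (fun x => rho x * (~~ a x)%:R) sig.
    apply/matrixP => i j; rewrite !mxE -big_split; apply: eq_bigr => x _ /=.
    rewrite -big_split; apply: eq_bigr => y _ /=.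
    by case: (a x) => /=; ring.
  apply: leq_trans (mxrank_add _ _) _.
  rewrite expnS mul2n -addnn leq_add //.
    by apply: leq_trans (IH1 _ _) _; rewrite leq_exp2l // leq_maxr.
  by apply: leq_trans (IH0 _ _) _; rewrite leq_exp2l // leq_maxl.
- have -> : Mp (PBob b P0 P1) rho sig =
     Mp P1 rho (fun y => sig y * (b y)%:R) + Mp P0 rho (fun y => sig y * (~~ b y)%:R).
    apply/matrixP => i j; rewrite !mxE -big_split; apply: eq_bigr => x _ /=.
    rewrite -big_split; apply: eq_bigr => y _ /=.
    by case: (b y) => /=; ring.
  apply: leq_trans (mxrank_add _ _) _.
  rewrite expnS mul2n -addnn leq_add //.
    by apply: leq_trans (IH1 _ _) _; rewrite leq_exp2l // leq_maxr.
  by apply: leq_trans (IH0 _ _) _; rewrite leq_exp2l // leq_maxl.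
Qed.

Lemma rank_bound (F : X -> Y -> bool) (P : protocol X Y) (kap : rat) :
  (forall x y, peval P x y = F x y) -> kap != 0 ->
  (forall i j, \sum_x \sum_y al i x * be j y * (F x y)%:R = if i == j then kap else 0) ->
  (m <= 2 ^ pdepth P)%N.
Proof.
move=> HP k0 HK.
have E : Mp P (fun _ => 1) (fun _ => 1) = kap%:M.
  apply/matrixP => i j; rewrite !mxE (_ : kap *+ (i == j) = if i == j then kap else 0); last by case: (i == j).
  rewrite -HK; apply: eq_bigr => x _.
  by apply: eq_bigr => y _; rewrite HP !mulr1.
have R : \rank (kap%:M : 'M[rat]_m) = m.
  by rewrite -scalemx1 mxrank_scale_nz // mxrank1.
rewrite -R -E; exact: Mp_rank.
Qed.

End Rank.


Section Sym.
Variable n : nat.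

Definition vecs (A : {set 'I_n}) : bvec n := [ffun i => i \in A].
Definition supp (x : bvec n) : {set 'I_n} := [set i | x i].
Definition gw (k : nat) : bvec n := [ffun i : 'I_n => (i < k)%N].

Lemma suppK : cancel supp vecs.
Proof. by move=> x; apply/ffunP => i; rewrite ffunE inE. Qed.
Lemma vecsK : cancel vecs supp.
Proof. by move=> A; apply/setP => i; rewrite inE ffunE. Qed.

Lemma hweight_vecs A : hweight (vecs A) = #|A|.
Proof. by rewrite /hweight -/(supp _) vecsK. Qed.

Lemma hweight_gw k : (k <= n)%N -> hweight (gw k) = k.
Proof.
move=> kn; rewrite /hweight.
have -> : [set i | gw k i] = [set widen_ord kn j | j : 'I_k].
  apply/setP => i; rewrite inE ffunE; apply/idP/imsetP => [ik|[j _ ->]].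
    by exists (Ordinal ik) => //; apply: val_inj.
  by rewrite /= ltn_ord.
by rewrite card_imset ?card_ord // => a b /(congr1 val) /= /val_inj.
Qed.

Lemma hweight_le (x : bvec n) : (hweight x <= n)%N.
Proof. by rewrite /hweight; apply: leq_trans (max_card _) _; rewrite card_ord. Qed.

Lemma sym_gw (f : bvec n -> bool) : symmetric_fun f -> forall x, f x = f (gw (hweight x)).
Proof. by move=> Hs x; apply: Hs; rewrite hweight_gw // hweight_le. Qed.

Local Open Scope ring_scope.

Definition gq (f : bvec n -> bool) (k : nat) : rat := (f (gw k))%:R.

Lemma LB (f : bvec n -> bool) (P : protocol (bvec n) (bvec n)) t :
  symmetric_fun f -> (forall x y, peval P x y = compAND f x y) ->
  (t <= n)%N -> difn t (gq f) 0 != 0 -> ('C(n, t) <= 2 ^ pdepth P)%N.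
Proof.
move=> Hs HP tn k0.
pose A := [set S : {set 'I_n} | #|S| == t].
have cA : #|A| = 'C(n, t) by rewrite card_draws card_ord.
rewrite -cA.
pose Si (i : 'I_#|A|) : {set 'I_n} := enum_val i.
have Sit : forall i, #|Si i| = t.
  by move=> i; have := enum_valP i; rewrite inE => /eqP.
pose al (i : 'I_#|A|) (x : bvec n) : rat :=
  if supp x \subset Si i then (-1) ^+ (t - #|supp x|) else 0.
pose be (j : 'I_#|A|) (y : bvec n) : rat := (y == vecs (Si j))%:R.
apply: (@rank_bound _ _ _ al be (compAND f) P (difn t (gq f) 0)) => // i j.
have Fv : forall T U, (compAND f (vecs T) (vecs U))%:R = gq f #|T :&: U|.
  move=> T U; rewrite /compAND /gq (sym_gw Hs); congr ((f (gw _))%:R).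
  rewrite -hweight_vecs; congr hweight; apply/ffunP => k.
  by rewrite !ffunE inE.
have E1 : forall x, \sum_y al i x * be j y * (compAND f x y)%:R =
                    al i x * (compAND f x (vecs (Si j)))%:R.
  move=> x; rewrite (bigD1 (vecs (Si j))) //= big1 ?addr0.
    by rewrite /be eqxx mulr1.
  by move=> y /negbTE yn; rewrite /be yn mulr0 mul0r.
under eq_bigr => x _ do rewrite E1.
rewrite (reindex vecs) /=; last by exists supp => x _; [exact: vecsK | exact: suppK].
under eq_bigr => T _ do rewrite Fv /al vecsK (fun_if (fun z => z * _)) mul0r.
rewrite -big_mkcond /=.
have -> : \sum_(T : {set 'I_n} | T \subset Si i) (-1) ^+ (t - #|T|) * gq f #|T :&: Si j| =
          ssum (Si i) (fun T => (-1) ^+ (t - #|T|) * gq f #|T :&: Si j|) by [].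
case: eqP => [<-|neq].
  rewrite -(Sit i) -ssum_diff; apply: eq_bigr => T TS.
  by rewrite (setIidPl TS).
have nsub : ~~ (Si i \subset Si j).
  apply/negP => sub; apply: neq; apply: enum_val_inj; apply/eqP.
  by rewrite eqEcard sub /= !Sit.
case/subsetPn: nsub => e eSi eSj.
apply: (ssum_vanish eSi) => T TS.
have eT : e \notin T by move: TS; rewrite subsetD1 => /andP[].
have Tt : (#|T| < t)%N.
  rewrite -(Sit i) (cardsD1 e (Si i)) eSi add1n ltnS; exact: subset_leq_card.
rewrite cardsU1 eT add1n setIUl.
have -> : [set e] :&: Si j = set0.
  by apply/setP => k; rewrite !inE; apply/andP => -[/eqP -> ]; rewrite (negbTE eSj).
rewrite set0U subnS.
have : (0 < t - #|T|)%N by rewrite subn_gt0.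
case: (t - #|T|)%N => [|k'] // _.
by rewrite /= exprS; ring.
Qed.

End Sym.


Section Poly.
Local Open Scope ring_scope.

Definition bprod (s : nat) : {poly rat} := \prod_(i <- iota 0 s) ('X - (i%:R)%:P).
Definition bp (s : nat) : {poly rat} := (s`!%:R)^-1 *: bprod s.

Lemma size_bp s : (size (bp s) <= s.+1)%N.
Proof.
by apply: leq_trans (size_scale_leq _ _) _; rewrite /bprod size_prod_XsubC size_iota.
Qed.

Lemma prod_ffact k s : \prod_(i <- iota 0 s) ((k%:R : rat) - i%:R) = (k ^_ s)%:R.
Proof.
elim: s => [|s IH]; first by rewrite big_nil ffactn0.
have -> : iota 0 s.+1 = rcons (iota 0 s) s by rewrite -cats1 -addn1 iotaD.
rewrite -cats1 big_cat big_seq1 /= IH.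
rewrite ffactnSr natrM.
case: (leqP s k) => sk; first by rewrite natrB.
by rewrite ffact_small // mul0r mul0r.
Qed.

Lemma horner_bp s k : (bp s).[k%:R] = ('C(k, s))%:R.
Proof.
rewrite hornerZ /bprod horner_prod.
under eq_bigr => i _ do rewrite hornerD hornerN hornerX hornerC.
rewrite prod_ffact -bin_ffact natrM mulrC mulrK //.
by rewrite unitfE pnatr_eq0 -lt0n fact_gt0.
Qed.

Lemma sum_ext0 (F : nat -> rat) a b : (a <= b)%N ->
  (forall s, (a <= s < b)%N -> F s = 0) ->
  \sum_(s < b) F s = \sum_(s < a) F s.
Proof.
move=> ab H; rewrite [in RHS](big_ord_widen b F ab) [in RHS]big_mkcond /=.
apply: eq_bigr => i _.
by case: ifP => //; rewrite ltnNge => /negbFE ai; rewrite H // ai ltn_ord.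
Qed.

Lemma poly_arg (h : nat -> rat) L m : (0 < m)%N -> (m.*2 <= L.+2)%N ->
  (forall k, (k <= L)%N -> h k = 0 \/ h k = 1) ->
  (forall s, (m <= s <= L)%N -> difn s h 0 = 0) ->
  forall k, (k <= L)%N -> h k = h 0.
Proof.
move=> m0 mL Hb Hd.
pose P : {poly rat} := \sum_(s < m) difn s h 0 *: bp s.
have HP : forall k, (k <= L)%N -> h k = P.[k%:R].
  move=> k kL; rewrite horner_sum.
  under [in RHS]eq_bigr => s _ do rewrite hornerZ horner_bp mulrC.
  have := newton h 0 k; rewrite add0n => ->.
  rewrite -(@sum_ext0 (fun s => ('C(k, s))%:R * difn s h 0) _ (m + L).+1); last 2 first.
  - lia.
  - by move=> s /andP[ks _]; rewrite bin_small // mul0r.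
  rewrite -(@sum_ext0 (fun s => ('C(k, s))%:R * difn s h 0) m (m + L).+1) //; last 2 first.
  - lia.
  - move=> s /andP[ms _]; case: (leqP s L) => sL.
      by rewrite Hd ?mulr0 // ms sL.
    by rewrite bin_small ?mul0r //; apply: leq_ltn_trans sL.
have sP : (size P <= m)%N.
  apply: leq_trans (size_sum _ _ _) _; apply/bigmax_leqP => s _.
  by apply: leq_trans (size_scale_leq _ _) _; apply: leq_trans (size_bp s) _.
pose Q := P * (P - 1).
have Q0 : Q = 0.
  apply/eqP; apply: contraT => Qn0.
  have := max_poly_roots Qn0 (rs := [seq i%:R | i <- iota 0 L.+1]).
  rewrite size_map size_iota.
  have -> : all (root Q) [seq i%:R | i <- iota 0 L.+1].
    apply/allP => x /mapP [k]; rewrite mem_iota add0n ltnS => kL ->.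
    rewrite /root /Q hornerM hornerD hornerN hornerC -HP //.
    by case: (Hb k kL) => ->; rewrite ?mul0r ?subrr ?mulr0.
  have -> : uniq [seq (i%:R : rat) | i <- iota 0 L.+1].
    by rewrite map_inj_uniq ?iota_uniq // => a b /eqP; rewrite eqr_nat => /eqP.
  move=> /(_ isT isT) lt.
  have := size_polyMleq P (P - 1).
  have : (size (P - 1)%R <= m)%N.
    apply: leq_trans (size_polyD _ _) _; rewrite size_polyN size_poly1 geq_max sP.
    by [].
  rewrite -/Q => h1 h2; have := leq_trans lt h2.
  move: mL h1 sP; rewrite -mul2n; generalize (size P) (size (P - 1)%R); lia.
move=> k kL; rewrite HP // (HP 0%N) //.
move/eqP: Q0; rewrite mulf_eq0 subr_eq0 => /orP[] /eqP ->.
  by rewrite !horner0.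
by rewrite !hornerC.
Qed.

End Poly.


Lemma bin_mid_ge k : 2 ^ k <= 'C(k.*2, k).
Proof.
elim: k => // k IH.
have E : 'C(k.*2.+2, k.+1) * k.+1 = k.*2.+2 * 'C(k.*2.+1, k).
  by rewrite [RHS]mul_bin_diag mulnC.
have E2 : 'C(k.*2, k) <= 'C(k.*2.+1, k).
  by case: k {IH E} => // k; rewrite doubleS binS leq_addr.
rewrite doubleS expnS.
have : 2 * 'C(k.*2, k) * k.+1 <= 'C(k.*2.+2, k.+1) * k.+1.
  rewrite E; move: E2; rewrite -!mul2n; nia.
by rewrite leq_pmul2r // => H; apply: leq_trans H; rewrite leq_mul2l IH orbT.
Qed.

Lemma bin_ge_pow n k : k.*2 <= n -> 2 ^ k <= 'C(n, k).
Proof. by move=> kn; apply: leq_trans (bin_mid_ge k) (leq_bin2l _ kn). Qed.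

Lemma bin_lower n R : R <= n -> n ^ R <= R ^ R * 'C(n, R).
Proof.
move=> Rn.
rewrite -(@leq_pmul2r (R`!)) ?fact_gt0 // -mulnA bin_ffact -ffactnn !ffact_prod.
have P1 : forall c, c ^ R = \prod_(i < R) c by move=> c; rewrite prod_nat_const card_ord.
rewrite !P1 -!big_split /=.
apply: leq_prod => i _.
have iR := ltn_ord i.
nia.
Qed.

Section Lcm.
Local Open Scope ring_scope.

Lemma int_difn k a (h : nat -> rat) :
  (forall i, (i <= k)%N -> h (a + i)%N \is a Num.int) -> difn k h a \is a Num.int.
Proof.
elim: k h => [|k IH] h H; first by have := H 0%N (leqnn 0); rewrite addn0.
rewrite difnS; apply: IH => i ik; rewrite /dif rpredB //.
  by rewrite -addnS H.
by rewrite H // (leq_trans ik).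
Qed.

Lemma difn_inv N k a : (0 < a)%N ->
  difn k (fun x => N%:R / x%:R) a * ((a + k) ^_ k.+1)%:R = (-1) ^+ k * (k`! * N)%:R.
Proof.
elim: k a => [|k IH] a a0.
  rewrite addn0 ffactn1 /= mulfVK ?expr0 ?mul1r ?fact0 ?mul1n //.
  by rewrite pnatr_eq0 -lt0n.
have F1 : ((a + k.+1) ^_ k.+2 = (a + k.+1) * (a + k) ^_ k.+1)%N by rewrite addnS ffactSS.
have F2 : ((a + k.+1) ^_ k.+2 = (a.+1 + k) ^_ k.+1 * a)%N.
  by rewrite ffactnSr addSnnS addnK.
have e1 := IH a.+1 isT.
have e0 := IH a a0.
move: e1 e0; set h := (fun x : nat => _).
set D1 := difn k h a.+1; set D0 := difn k h a => e1 e0.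
rewrite difnS' -/D1 -/D0 mulrBl.
have -> : D1 * ((a + k.+1) ^_ k.+2)%:R = (D1 * ((a.+1 + k) ^_ k.+1)%:R) * a%:R.
  by rewrite F2 natrM mulrA.
have -> : D0 * ((a + k.+1) ^_ k.+2)%:R = (D0 * ((a + k) ^_ k.+1)%:R) * (a + k.+1)%:R.
  by rewrite F1 natrM mulrCA mulrC.
rewrite e1 e0 factS !natrM natrD !exprS; ring.
Qed.


Lemma div_bound M N : (0 < N)%N -> (forall m, (0 < m <= M.*2)%N -> (m %| N)%N) ->
  (2 ^ M <= N)%N.
Proof.
move=> N0 Hd; case: M Hd => [|M'] Hd; first by rewrite expn0.
set M := M'.+1.
have Mm : (M'.+2 + M')%N = M.*2 by rewrite /M -addnn addSnnS addnS.
have HI := @int_difn M' M'.+2 (fun x => N%:R / x%:R).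
have zint : difn M' (fun x => N%:R / x%:R) M'.+2 \is a Num.int.
  apply: HI => i iM.
  have dv : ((M'.+2 + i) %| N)%N by apply: Hd; rewrite addSn ltn0Sn /=; lia.
  by rewrite -natr_div ?natr_int // unitfE pnatr_eq0.
have E := @difn_inv N M' M'.+2 isT.
case/intrP: zint E => w ->.
rewrite Mm -bin_ffact [M`!]factS natrM -/M.
move=> /(congr1 (fun x : rat => `|x|)).
rewrite !normrM normrX normrN1 expr1n mul1r !normr_nat -intr_norm -abszE -pmulrn.
rewrite -natrM -!natrM => /eqP; rewrite eqr_nat => /eqP E.
have w0 : (0 < `|w|)%N.
  rewrite absz_gt0; apply/eqP => w0; move: E; rewrite w0 /= mul0n.
  have := fact_gt0 M'; nia.
have F0 := fact_gt0 M'.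
have E' : (`|w| * 'C(M.*2, M) * M = N)%N.
  apply/eqP; rewrite -(eqn_pmul2l F0) -E; apply/eqP.
  by rewrite mulnC !mulnA.
apply: leq_trans (bin_mid_ge M) _; rewrite -E'.
exact: leq_trans (leq_pmull _ w0) (leq_pmulr _ (ltn0Sn M')).
Qed.

End Lcm.


Lemma naadt_size n (f : bvec n -> bool) k Ss : NAADT_is f k -> determines f Ss -> k <= size Ss.
Proof. by move=> [_ H] D; apply: H; exists Ss. Qed.

Section Fam.
Variable n : nat.

Definition singles : seq {set 'I_n} := [seq [set i] | i <- enum 'I_n].

Lemma singles_size : size singles = n.
Proof. by rewrite size_map size_enum_ord. Qed.

Lemma singles_det (f : bvec n -> bool) : determines f singles.
Proof.
move=> x y H; congr f; apply/ffunP => i.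
have := H [set i]; rewrite /singles map_f ?mem_enum // => /(_ isT).
rewrite /AND_S => E.
have ex : forall z : bvec n, [forall j in [set i], z j] = z i.
  move=> z; apply/forall_inP/idP => [/(_ i (set11 i))//|zi j]; rewrite inE => /eqP -> //.
by rewrite -!ex.
Qed.

Definition resfam (X : nat) : seq {set 'I_n} :=
  [seq [set i : 'I_n | i %% (nat_of_ord p.1).+1 == nat_of_ord p.2] | p : 'I_X * 'I_X <- enum {: 'I_X * 'I_X}].

Lemma resfam_size X : size (resfam X) = X * X.
Proof. by rewrite size_map -cardE card_prod card_ord. Qed.

Definition dist (a b : nat) := (a - b) + (b - a).

Lemma dist_dvd m a b : a %% m = b %% m -> m %| dist a b.
Proof.
move=> E; rewrite /dist; case: (leqP a b) => ab.
  by rewrite (eqP (_ : a - b == 0)) ?subn_eq0 // add0n -eqn_mod_dvd // E.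
by rewrite (eqP (_ : b - a == 0)) ?subn_eq0 ?(ltnW ab) // addn0 -eqn_mod_dvd ?(ltnW ab) // E.
Qed.

Lemma resfam_cover X R (Z : {set 'I_n}) (j : 'I_n) :
  n ^ R < 2 ^ X./2 -> #|Z| <= R -> j \notin Z ->
  exists2 S, S \in resfam X & (j \in S) && (S \subset ~: Z).
Proof.
move=> nX ZR jZ.
have n0 : 0 < n := leq_ltn_trans (leq0n j) (ltn_ord j).
case: (boolP [exists m : 'I_X, [forall z in Z, (z %% m.+1 != j %% m.+1)]]).
  case/existsP => m /forall_inP Hm.
  have rX : j %% m.+1 < X by apply: leq_trans (ltn_pmod _ _) (ltn_ord m).
  exists [set i : 'I_n | i %% m.+1 == j %% m.+1].
    by apply/mapP; exists (m, Ordinal rX); rewrite ?mem_enum.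
  rewrite inE eqxx /=; apply/subsetP => z; rewrite !inE => /eqP zm.
  by apply/negP => zZ; move: (Hm z zZ); rewrite zm eqxx.
rewrite negb_exists => /forallP Hall.
pose N := \prod_(z in Z) dist j z.
have dpos : forall z, z \in Z -> 0 < dist j z.
  move=> z zZ; rewrite /dist; have : (j : nat) != z.
    by apply: contraNneq jZ => /val_inj ->.
  lia.
have N0 : 0 < N by rewrite prodn_cond_gt0 // => z /dpos.
have := @div_bound X./2 N N0.
have Nle : N <= n ^ R.
  apply: leq_trans (leq_pexp2l n0 ZR); rewrite -prod_nat_const.
  apply: leq_prod => z _; rewrite /dist; have := ltn_ord j; have := ltn_ord z; lia.
suff H : forall m, 0 < m <= X./2.*2 -> m %| N.
  by move=> /(_ H) le; move: (leq_ltn_trans Nle nX); rewrite ltnNge le.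
move=> m /andP[m0 mX].
have mX' : m.-1 < X by rewrite -ltnS prednK //; apply: leq_ltn_trans mX _; rewrite -ltnS; have := odd_double_half X; lia.
have /forall_inPn [z zZ] := Hall (Ordinal mX').
rewrite negbK /= prednK // => /eqP E.
apply: dvdn_trans (dist_dvd (esym E)) _.
by rewrite /N (bigD1 z) //= dvdn_mulr.
Qed.

Definition zer (x : bvec n) : {set 'I_n} := [set i | ~~ x i].

Lemma card_zer (x : bvec n) : #|zer x| = n - hweight x.
Proof.
have E := cardsC [set i | x i]; rewrite card_ord in E.
rewrite -[X in X - _]E /hweight addKn (_ : zer x = ~: [set i | x i]) //.
by apply/setP => i; rewrite !inE.
Qed.

Lemma AND_zer S (x : bvec n) : AND_S S x = (S \subset ~: zer x).
Proof.
apply/forall_inP/subsetP => H i iS; first by rewrite !inE negbK H.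
by have := H i iS; rewrite !inE negbK.
Qed.

Definition zhat X (x : bvec n) : {set 'I_n} :=
  [set j | all (fun S : {set 'I_n} => (j \in S) ==> ~~ AND_S S x) (resfam X)].

Lemma zer_zhat X x : zer x \subset zhat X x.
Proof.
apply/subsetP => j jZ; rewrite inE; apply/allP => S _; apply/implyP => jS.
rewrite AND_zer; apply/negP => /subsetP /(_ j jS); rewrite inE jZ.
by [].
Qed.

Lemma zhat_eq X R x : n ^ R < 2 ^ X./2 -> #|zer x| <= R -> zhat X x = zer x.
Proof.
move=> nX ZR; apply/eqP; rewrite eqEsubset zer_zhat andbT.
apply/subsetP => j; apply: contraTT => jZ.
have [S Sin /andP[jS Ssub]] := resfam_cover nX ZR jZ.
rewrite inE; apply/allPn; exists S => //.
by rewrite jS /= AND_zer Ssub.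
Qed.

Lemma resfam_det (f : bvec n -> bool) X R : n ^ R < 2 ^ X./2 ->
  (forall x y : bvec n, hweight x + R < n -> hweight y + R < n -> f x = f y) ->
  determines f (resfam X).
Proof.
move=> nX Hc x y Hq.
have Ezh : zhat X x = zhat X y.
  apply/setP => j; rewrite !inE; apply: eq_in_all => S /Hq ->; by [].
have key : forall x y : bvec n, zhat X x = zhat X y -> #|zer x| <= R -> x = y.
  move=> u v E uR.
  have vsub : zer v \subset zer u by rewrite -(zhat_eq nX uR) E zer_zhat.
  have vR : #|zer v| <= R := leq_trans (subset_leq_card vsub) uR.
  have Ez : zer u = zer v by rewrite -(zhat_eq nX uR) E (zhat_eq nX vR).
  apply/ffunP => i; move/setP: Ez => /(_ i); rewrite !inE.
  by case: (u i); case: (v i).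
case: (leqP #|zer x| R) => xR; first by rewrite (key x y Ezh xR).
case: (leqP #|zer y| R) => yR; first by rewrite (key y x (esym Ezh) yR).
by apply: Hc; move: xR yR; rewrite !card_zer; lia.
Qed.

End Fam.


Lemma f_const_k n (f : bvec n -> bool) k : NAADT_is f k -> (forall x y, f x = f y) -> k = 0.
Proof.
move=> Hk Hc; apply/eqP; rewrite -leqn0.
by apply: (naadt_size (Ss := [::]) Hk) => x y _; apply: Hc.
Qed.

Section Main.
Variables (n : nat) (f : bvec n -> bool) (Hs : symmetric_fun f)
  (P : protocol (bvec n) (bvec n)) (HP : forall x y, peval P x y = compAND f x y).

Let G w := f (gw n w).

Lemma fG x : f x = G (hweight x).
Proof. exact: sym_gw. Qed.

Lemma depth_pos : (exists x y, f x != f y) -> 0 < pdepth P.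
Proof.
case=> x [y nxy]; move: HP; case: P => // b HP'; exfalso.
have E : forall z, f z = b.
  move=> z; have := HP' z [ffun => true]; rewrite /= /compAND => ->; congr f.
  by apply/ffunP => i; rewrite !ffunE andbT.
by move: nxy; rewrite !E eqxx.
Qed.

Lemma gqG w : gq f w = ((G w)%:R)%R.
Proof. by []. Qed.


Lemma main_bound k : (exists x y, f x != f y) -> NAADT_is f k ->
  k <= 100 * (pdepth P) ^ 2.
Proof.
move=> nc Hk.
set d := pdepth P.
have d1 : 0 < d by apply: depth_pos.
have kn : k <= n by rewrite -(singles_size n); apply: naadt_size Hk (singles_det f).
have d2 : d <= d ^ 2 by rewrite expnS expn1 leq_pmulr.
have ex : exists w, (w < n) && (G w != G w.+1).
  case: (boolP [exists w : 'I_n, G w != G w.+1]) => [/existsP [w Hw]|].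
    by exists w; rewrite ltn_ord Hw.
  rewrite negb_exists => /forallP H.
  exfalso; move: nc => [x [y]]; apply/negP; rewrite negbK.
  have all0 : forall w, w <= n -> G w = G 0.
    elim=> // w IH wn; rewrite -IH ?(ltnW wn) //.
    by apply/esym/eqP; move: (H (Ordinal wn)); rewrite negbK.
  by rewrite !fG !all0 ?hweight_le.
case: (ex_minnP ex) => a /andP[an aG] amin.
have Gc : forall w, w <= a -> G w = G 0.
  elim=> // w IH wa; rewrite -IH ?(ltnW wa) //.
  apply/eqP; apply: contraT => ne.
  have := amin w; rewrite (ltn_trans wa an) eq_sym ne => /(_ isT).
  by rewrite leqNgt wa.
have fc : forall x, hweight x <= a -> f x = G 0 by move=> x hx; rewrite fG Gc.
have gq01 : forall w, (gq f w == 0)%R || (gq f w == 1)%R.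
  by move=> w; rewrite gqG; case: (G w).
have LB1 : 'C(n, a.+1) <= 2 ^ d.
  apply: (LB Hs HP an).
  rewrite (@const_prefix a.+1 (gq f) 0) //; last first.
    by move=> i ia; rewrite add0n !gqG Gc.
  rewrite add0n !gqG subr_eq0 eqr_nat -(Gc a) //.
  by move: aG; case: (G a.+1); case: (G a).
set R := n - a.+1.
have CR : 'C(n, R) <= 2 ^ d by rewrite bin_sub.
have oL1 : forall z, odd z <= 1 by move=> z; case: (odd z).
case: (ltnP n R.*2) => [c3|c12].
  set L := n./2.
  set m := (L./2).+1.
  have hL := odd_double_half L; have hn := odd_double_half n.
  have oL := oL1 L; have on := oL1 n.
  have aL : a.+1 <= L by move: c3 hn; rewrite /R -!mul2n; lia.
  have [s /andP[/andP[ms sL] sd]] : exists s, (m <= s <= L) && (difn s (gq f) 0 != 0)%R.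
    case: (boolP [exists s : 'I_L.+1, (m <= s) && (difn s (gq f) 0 != 0)%R]).
      by case/existsP => s /andP[ms sd]; exists s; rewrite ms -ltnS ltn_ord sd.
    rewrite negb_exists => /forallP H; exfalso.
    have m2 : m.*2 <= L.+2 by move: hL; rewrite /m -!mul2n; lia.
    have Hb : forall k0, k0 <= L -> gq f k0 = 0%R \/ gq f k0 = 1%R.
      by move=> k0 _; case/orP: (gq01 k0) => /eqP ->; [left|right].
    have Hd : forall s, m <= s <= L -> difn s (gq f) 0 = 0%R.
      move=> s' /andP[ms' sL']; have := H (Ordinal (sL' : s' < L.+1)).
      by rewrite /= ms' /= negbK => /eqP.
    have := @poly_arg (gq f) L m isT m2 Hb Hd a.+1 aL.
    rewrite !gqG => /eqP; rewrite eqr_nat -(Gc a) //.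
    by move: aG; case: (G a.+1); case: (G a).
  have sn : s <= n by move: sL hn; rewrite /L -mul2n; lia.
  have Cs := LB Hs HP sn sd.
  have s2 : s.*2 <= n by move: sL hn; rewrite /L -!mul2n; lia.
  have := leq_trans (bin_ge_pow s2) Cs; rewrite leq_exp2l // => sd'.
  have n4 : n <= 4 * s by move: ms hL hn; rewrite /m /L -!mul2n; lia.
  by move: d2; nia.
case: (ltnP n (R * R)) => [c2|c1].
  have := leq_trans (bin_ge_pow c12) CR; rewrite leq_exp2l // => Rd.
  have : R * R <= d * d by apply: leq_mul.
  by move: d2; rewrite expnS expn1; lia.
have Hc : forall x y : bvec n, hweight x + R < n -> hweight y + R < n -> f x = f y.
  by move=> x y hx hy; rewrite !fc //; move: hx hy; rewrite /R; lia.
case: (posnP R) => [R0|Rpos].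
  have nR : n ^ R < 2 ^ (2./2) by rewrite R0.
  have := naadt_size Hk (resfam_det nR Hc); rewrite resfam_size => k4.
  by move: d2 d1; nia.
set l := trunc_log 2 n.
set h := l./2.
have n0 : 0 < n by apply: leq_ltn_trans an.
have hl := odd_double_half l.
have ol := oL1 l.
have nl : n < 2 ^ l.+1 by apply: trunc_log_ltn.
have ln : 2 ^ l <= n by apply: trunc_logP.
case: (posnP h) => [h0|hpos].
  have l1 : l.+1 <= 2 by move: hl; rewrite -/h h0 -mul2n; lia.
  have : 2 ^ l.+1 <= 2 ^ 2 by rewrite leq_exp2l.
  by move: d2 d1 nl kn; nia.
set M := l.+1 * R + 1.
have nR : n ^ R < 2 ^ (M.*2)./2.
  rewrite doubleK; apply: (@leq_trans ((2 ^ l.+1) ^ R)).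
    by rewrite ltn_exp2r.
  by rewrite -expnM leq_exp2l // /M addn1.
have := naadt_size Hk (resfam_det nR Hc); rewrite resfam_size => kX.
have RN : R <= n by move: c12; rewrite -mul2n; lia.
have bl := bin_lower RN.
have hRn : 2 ^ h * R <= n.
  rewrite -(@leq_exp2r _ _ 2) //.
  have e1 : 2 ^ (h.*2) <= 2 ^ l by rewrite leq_exp2l //; move: hl; rewrite -mul2n; lia.
  rewrite expnMn -expnM mulnC -mul2n in e1 *.
  rewrite mulnC (mulnC h) [n ^ 2]expnS expn1.
  by apply: leq_mul (leq_trans e1 ln) _; rewrite expnS expn1.
have Cb : 2 ^ (h * R) <= 'C(n, R).
  have H1 : (2 ^ h * R) ^ R <= n ^ R by rewrite leq_exp2r.
  have H2 := leq_trans H1 bl; rewrite expnMn -expnM in H2.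
  by rewrite -(@leq_pmul2l (R ^ R)) ?expn_gt0 ?Rpos // mulnC.
have := leq_trans Cb CR; rewrite leq_exp2l // => hRd.
have ll : l <= h.*2 + 1 by move: hl; rewrite -!mul2n; lia.
have M5 : M <= 5 * d.
  rewrite /M; move: ll hRd hpos Rpos; rewrite -mul2n; nia.
by move: kX M5 d2; rewrite -!mul2n; nia.
Qed.

End Main.

Theorem theorem1p5 :
  exists C : nat, forall (n : nat) (f : bvec n -> bool) (k d : nat),
    symmetric_fun f -> NAADT_is f k -> Dcc_is (compAND f) d ->
    k <= C * d ^ 2.
Proof.
exists 100 => n f k d Hs Hk [[P [HP Pd]] _].
case: (boolP [exists x, exists y, f x != f y]).
  case/existsP => x /existsP [y nxy].
  have := main_bound Hs HP (ex_intro _ x (ex_intro _ y nxy)) Hk.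
  move=> H; apply: leq_trans H _; rewrite leq_mul2l /=.
  by rewrite leq_exp2r.
rewrite negb_exists => /forallP H.
rewrite (f_const_k Hk) // => x y.
have := H x; rewrite negb_exists => /forallP /(_ y).
by rewrite negbK => /eqP.
Qed.
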